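(* Let $G$ be a countable vertex set and let $c,b$ be conductance functions on $G$ with $b_{xy}\le c_{xy}$ for all $x,y$, such that $(G,c)$ and $(G,b)$ are connected locally finite networks. Then the inclusion map $\mathcal I:\mathcal H_{\mathcal E_c}\to\mathcal H_{\mathcal E_b}$ is injective.
   Context: A conductance function on a countable set $G$ is a symmetric map $c:G\times G\to[0,\infty)$ with $c_{xx}=0$; $x\sim y$ iff $c_{xy}>0$; locally finite and connected (any two vertices joined by a finite path). $\mathcal E_c(u,v)=\frac12\sum_{x,y}c_{xy}\overline{(u(x)-u(y))}(v(x)-v(y))$, and $\mathcal H_{\mathcal E_c}$ is the Hilbert space of functions $u:G\to\mathbb C$ with $\mathcal E_c(u,u)<\infty$ modulo constants, with inner product $\mathcal E_c$. Same for $b$. $\mathcal I$ sends the class of $u$ in $\mathcal H_{\mathcal E_c}$ to its class in $\mathcal H_{\mathcal E_b}$. *)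

(* Defs.v *)
From HB Require Import structures.
From mathcomp Require Import all_boot all_order all_algebra.
From mathcomp Require Import all_classical all_reals.
From mathcomp Require Import ereal esum.
From mathcomp.real_closed Require complex.
Import complex.ComplexField.
Set Implicit Arguments. Unset Strict Implicit. Unset Printing Implicit Defensive.
Import Order.TTheory GRing.Theory Num.Theory.
Local Open Scope ring_scope.
Local Open Scope classical_set_scope.

Notation Cplx R := (complex.complex R).

Definition sqmod (R : realType) (z : Cplx R) : R :=
  complex.Re z ^+ 2 + complex.Im z ^+ 2.

Definition conductance (R : realType) (G : Type) (c : G -> G -> R) : Prop :=
  (forall x y, 0 <= c x y) /\ (forall x y, c x y = c y x) /\ (forall x, c x x = 0).

Definition adj (R : realType) (G : Type) (c : G -> G -> R) : rel G :=
  fun x y => 0 < c x y.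

Definition locally_finite (R : realType) (G : Type) (c : G -> G -> R) : Prop :=
  forall x, finite_set [set y | adj c x y].

Definition connected_net (R : realType) (G : eqType) (c : G -> G -> R) : Prop :=
  forall x y, exists s : seq G, path (adj c) x s && (last x s == y).

Definition energy (R : realType) (G : choiceType) (c : G -> G -> R) (u : G -> Cplx R)
  : \bar R :=
  \esum_(p in [set: G * G]) ((c p.1 p.2 * sqmod (u p.1 - u p.2)) / 2)%:E.

Definition finite_energy (R : realType) (G : choiceType) (c : G -> G -> R)
  (u : G -> Cplx R) : Prop := (energy c u < +oo)%E.

(* the element of H_{E_c} represented by u: its class modulo constants,
   inside the space of finite-energy functions *)
Definition HE_class (R : realType) (G : choiceType) (c : G -> G -> R)
  (u : G -> Cplx R) : set (G -> Cplx R) :=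
  [set v | finite_energy c v /\ exists k : Cplx R, forall x, v x = u x + k].

Definition incl_map (R : realType) (G : choiceType) (b : G -> G -> R)
  (u : G -> Cplx R) : set (G -> Cplx R) := HE_class b u.

(* Main.v *)
Require Import Defs.
From HB Require Import structures.
From mathcomp Require Import all_boot all_order all_algebra.
From mathcomp Require Import all_classical all_reals.
From mathcomp Require Import ereal esum.
From mathcomp.real_closed Require complex.
Import complex.ComplexField.
Import Order.TTheory GRing.Theory Num.Theory.
Local Open Scope ring_scope.
Local Open Scope classical_set_scope.

Lemma fe_mono (R : realType) (G : countType) (c b : G -> G -> R) u :
  conductance b -> (forall x y, b x y <= c x y) ->
  finite_energy c u -> finite_energy b u.
Proof.
move=> [b0 _] hbc; rewrite /finite_energy /energy => h.
apply: le_lt_trans h; apply: le_esum => p _; rewrite lee_fin.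
apply: ler_wpM2r; first by rewrite invr_ge0.
apply: ler_wpM2r; last exact: hbc.
rewrite /sqmod; apply: addr_ge0; exact: sqr_ge0.
Qed.

Theorem corollary3p7 (R : realType) (G : countType) (c b : G -> G -> R) :
  conductance c -> conductance b ->
  (forall x y, b x y <= c x y) ->
  locally_finite c -> connected_net c ->
  locally_finite b -> connected_net b ->
  forall u v : G -> Cplx R,
    finite_energy c u -> finite_energy c v ->
    incl_map b u = incl_map b v -> HE_class c u = HE_class c v.
Proof.
move=> _ cb hbc _ _ _ _ u v fu fv E.
have : incl_map b u u.
  split; first exact: (@fe_mono R G c b u cb hbc fu).
  by exists 0 => x; rewrite addr0.
rewrite E => -[_ [k0 hk0]].
apply/seteqP; split => w [fw [k hk]]; split => //.
- by exists (k0 + k) => x; rewrite hk hk0 addrA.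
- by exists (k - k0) => x; rewrite hk hk0 -addrA; congr (_ + _); rewrite addrC subrK.
Qed.
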